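(* Let $M,N\in\mathbb{S}^{q+r}$ with $N\in\boldsymbol{\Pi}_{q,r}$. (a) Assume $N$ has at least one positive eigenvalue. Then $\mathcal{Z}_r(N)\subseteq\mathcal{Z}_r(M)$ if and only if $x^\top Mx\ge 0$ for all $x\in\mathbb{R}^{q+r}$ satisfying $x^\top Nx\ge 0$. (b) Assume $N_{22}<0$. Then $\mathcal{Z}_r(N)\subseteq\mathcal{Z}_r^+(M)$ if and only if $x^\top Mx>0$ for all nonzero $x\in\mathbb{R}^{q+r}$ satisfying $x^\top Nx\ge 0$.
   Context: $\mathbb{S}^k$ denotes the real symmetric $k\times k$ matrices; for symmetric matrices, $A\ge 0$ ($A>0$) means positive semidefinite (definite), $A<0$ negative definite. $A^\dagger$ is the Moore–Penrose pseudo-inverse. Any $N\in\mathbb{S}^{q+r}$ is partitioned as $N=\begin{bmatrix}N_{11}&N_{12}\\ N_{21}&N_{22}\end{bmatrix}$ with $N_{11}\in\mathbb{S}^q$, $N_{22}\in\mathbb{S}^r$ (same for $M$). The generalized Schur complement is $N\mid N_{22}:=N_{11}-N_{12}N_{22}^\dagger N_{21}$. The set $\boldsymbol{\Pi}_{q,r}$ consists of all $N\in\mathbb{S}^{q+r}$ with $N_{22}\le 0$, $N\mid N_{22}\ge 0$ and $\ker N_{22}\subseteq\ker N_{12}$. Define $\mathcal{Z}_r(\Pi)=\{Z\in\mathbb{R}^{r\times q}:\begin{bmatrix}I_q\\ Z\end{bmatrix}^\top\Pi\begin{bmatrix}I_q\\ Z\end{bmatrix}\ge 0\}$ and $\mathcal{Z}_r^+(\Pi)$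 the same with $>0$. *)

(* Defs.v *)
From HB Require Import structures.
From mathcomp Require Import all_boot all_order all_algebra.
From mathcomp Require Import reals.
Set Implicit Arguments. Unset Strict Implicit. Unset Printing Implicit Defensive.
Import Order.TTheory GRing.Theory Num.Theory.
Local Open Scope ring_scope.

Section Defs.
Variable R : realType.

Definition sym_mx n (A : 'M[R]_n) : Prop := A^T = A.

Definition qform n (A : 'M[R]_n) (x : 'cV[R]_n) : R := (x^T *m A *m x) 0 0.

Definition psd n (A : 'M[R]_n) : Prop := forall x : 'cV[R]_n, 0 <= qform A x.
Definition pd n (A : 'M[R]_n) : Prop := forall x : 'cV[R]_n, x != 0 -> 0 < qform A x.
Definition nsd n (A : 'M[R]_n) : Prop := forall x : 'cV[R]_n, qform A x <= 0.
Definition nd n (A : 'M[R]_n) : Prop := forall x : 'cV[R]_n, x != 0 -> qform A x < 0.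

Definition is_MP_inverse m n (A : 'M[R]_(m, n)) (X : 'M[R]_(n, m)) : Prop :=
  [/\ A *m X *m A = A, X *m A *m X = X, (A *m X)^T = A *m X & (X *m A)^T = X *m A].

Definition schur_psd q r (N : 'M[R]_(q + r)) : Prop :=
  exists X : 'M[R]_r, is_MP_inverse (drsubmx N) X /\
    psd (ulsubmx N - ursubmx N *m X *m dlsubmx N).

Definition Pi_set q r (N : 'M[R]_(q + r)) : Prop :=
  [/\ sym_mx N, nsd (drsubmx N), schur_psd N &
      forall x : 'cV[R]_r, drsubmx N *m x = 0 -> ursubmx N *m x = 0].

Definition IZ q r (Z : 'M[R]_(r, q)) : 'M[R]_(q + r, q) := col_mx 1%:M Z.

Definition Zset q r (P : 'M[R]_(q + r)) (Z : 'M[R]_(r, q)) : Prop :=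
  psd ((IZ Z)^T *m P *m IZ Z).
Definition Zset_pos q r (P : 'M[R]_(q + r)) (Z : 'M[R]_(r, q)) : Prop :=
  pd ((IZ Z)^T *m P *m IZ Z).

End Defs.

(* Main.v *)
Require Import Defs.
From HB Require Import structures.
From mathcomp Require Import all_boot all_order all_algebra.
From mathcomp Require Import reals ring lra.

Import Order.TTheory GRing.Theory Num.Theory.
Local Open Scope ring_scope.
Section S.
Variable R : realType.

Lemma qformE q r (N : 'M[R]_(q+r)) (X : 'M[R]_r) :
  N^T = N -> drsubmx N *m X *m dlsubmx N = dlsubmx N ->
  forall xi eta, qform N (col_mx xi eta) =
   qform (ulsubmx N - ursubmx N *m X *m dlsubmx N) xi
   + qform (drsubmx N) (eta + X *m dlsubmx N *m xi).
Proof.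
move=> sN hC xi eta.
set A := ulsubmx N; set B := ursubmx N; set C := dlsubmx N; set D := drsubmx N.
have hD : D^T = D by rewrite /D trmx_drsub sN.
have hB : B^T = C by rewrite /B trmx_ursub sN.
set u := X *m C *m xi.
have h1 : D *m u = C *m xi by rewrite /u !mulmxA hC.
have h2 : u^T *m D = xi^T *m B by rewrite -hD -trmx_mul h1 trmx_mul -hB trmxK.
have h3 : xi^T *m (B *m X *m C) *m xi = xi^T *m B *m u by rewrite /u !mulmxA.
rewrite /qform -{1}(submxK N) tr_col_mx mul_row_block mul_row_col.
rewrite -/A -/B -/C -/D.
have -> : (xi^T *m A + eta^T *m C) *m xi + (xi^T *m B + eta^T *m D) *m eta =
  xi^T *m (A - B *m X *m C) *m xi + (eta + u)^T *m D *m (eta + u).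
  rewrite mulmxBr mulmxBl h3 [(eta + u)^T]linearD /= !mulmxDl h2 !mulmxDr -[eta^T *m D *m u]mulmxA h1 !mulmxA.
  move: (xi^T *m A *m xi) (eta^T *m C *m xi) (xi^T *m B *m eta) (eta^T *m D *m eta) (xi^T *m B *m X *m C *m xi) => a b c d e.
  by apply/matrixP=> i j; rewrite !mxE; lra.
by rewrite [LHS]mxE.
Qed.


Lemma qform_tr m n (A : 'M[R]_(m,n)) (N : 'M[R]_m) v :
  qform (A^T *m N *m A) v = qform N (A *m v).
Proof. by rewrite /qform trmx_mul !mulmxA. Qed.

Lemma qform_scale n (D : 'M[R]_n) c z : qform D (c *: z) = c ^+ 2 * qform D z.
Proof.
rewrite /qform [(c *: z)^T]linearZ /= -!scalemxAl -!scalemxAr scalerA [LHS]mxE.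
by rewrite expr2.
Qed.

Definition cr n (M : 'M[R]_n) (y z : 'cV[R]_n) := (y^T *m M *m z + z^T *m M *m y) 0 0.
Arguments cr {n} M y z.

Lemma qform_add n (M : 'M[R]_n) y z t :
  qform M (y + t *: z) = qform M y + t * cr M y z + t ^+ 2 * qform M z.
Proof.
rewrite /qform /cr [(y + _)^T]linearD /= [(t *: z)^T]linearZ /= !mulmxDl !mulmxDr.
rewrite -!scalemxAl -!scalemxAr scalerA.
move: (y^T *m M *m y) (y^T *m M *m z) (z^T *m M *m y) (z^T *m M *m z) => a b c d.
rewrite !mxE expr2; ring.
Qed.

Lemma mul_c1 n (y : 'cV[R]_n) (s : 'M[R]_1) : y *m s = s 0 0 *: y.
Proof.
apply/matrixP=> i j; rewrite !ord1 !mxE big_ord1 mulrC.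
by rewrite !ord1.
Qed.

Lemma sq_pos n (x : 'cV[R]_n) : x != 0 -> 0 < (x^T *m x) 0 0.
Proof.
move=> nx; rewrite mxE.
case: (pickP (fun i => x i 0 != 0)) => [i Hi | H0]; last first.
  case/eqP: nx; apply/matrixP=> i j; rewrite !ord1 mxE.
  by move: (H0 i) => /negbFE /eqP.
rewrite (bigD1 i) //= ltr_pwDl ?sumr_ge0 //.
  by rewrite mxE -expr2 exprn_even_gt0.

by move=> k _; rewrite mxE -expr2 sqr_ge0.
Qed.

Lemma exists_l n (xi : 'cV[R]_n) : xi != 0 -> exists l : 'rV[R]_n, l *m xi = 1.
Proof.
move=> nx; have hp := sq_pos _ _ nx.
exists (((xi^T *m xi) 0 0)^-1 *: xi^T).
apply/matrixP=> i j; rewrite !ord1 -scalemxAl [LHS]mxE mulVf ?gt_eqF //.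
by rewrite mxE.
Qed.

Lemma quad_ge0 (a b c : R) : (forall t, 0 <= c + t * b + t ^+ 2 * a) -> 0 <= a.
Proof.
move=> H; rewrite leNgt; apply/negP => ha.
pose g := `|c|.
have hg : 0 <= g by rewrite normr_ge0.
have hcg : c <= g by rewrite ler_norm.
pose s := 1 + g / (- a).
have hs : 1 <= s by rewrite /s lerDl divr_ge0 // oppr_ge0 ltW.
have has : a * s = a - g.
  by rewrite /s; field; rewrite lt_eqF.
have h1 := H s; have h2 := H (- s).
nra.
Qed.

Lemma ker_mx r q (D : 'M[R]_r) (B : 'M[R]_(q, r)) :
  (forall x : 'cV[R]_r, D *m x = 0 -> B *m x = 0) ->
  forall k (Y : 'M[R]_(r, k)), D *m Y = 0 -> B *m Y = 0.
Proof.
move=> H k Y hY; apply/matrixP=> i j.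
have := H (col j Y); rewrite !colE mulmxA hY mul0mx => /(_ erefl).
move/(congr1 (fun M : 'M[R]_(q,1) => M i 0)); rewrite mulmxA -colE mxE => ->.
by rewrite !mxE.
Qed.

Lemma derive q r (N : 'M[R]_(q + r)) (X : 'M[R]_r) :
  N^T = N -> is_MP_inverse (drsubmx N) X ->
  (forall x : 'cV[R]_r, drsubmx N *m x = 0 -> ursubmx N *m x = 0) ->
  drsubmx N *m X *m dlsubmx N = dlsubmx N.
Proof.
move=> sN [h1 _ _ _] hK.
set B := ursubmx N; set C := dlsubmx N; set D := drsubmx N.
have hD : D^T = D by rewrite /D trmx_drsub sN.
have hB : B^T = C by rewrite /B trmx_ursub sN.
have e : D *m X^T *m D = D.
  by have := congr1 trmx h1; rewrite !trmx_mul hD mulmxA.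
have e2 : D *m (1%:M - X^T *m D) = 0 by rewrite mulmxBr mulmx1 mulmxA e subrr.
have := ker_mx _ _ _ _ hK _ _ e2; rewrite mulmxBr mulmx1 => /eqP; rewrite subr_eq0 => /eqP e3.
have := congr1 trmx e3; rewrite -/B !trmx_mul trmxK hD hB => E.
by rewrite -E.
Qed.

Lemma crE n (P : 'M[R]_n) y v : (y^T *m (P + P^T) *m v) 0 0 = cr P y v.
Proof.
rewrite /cr mulmxDr mulmxDl [in RHS]mxE [in LHS]mxE; congr (_ + _).
have -> : y^T *m P^T *m v = (v^T *m P *m y)^T by rewrite !trmx_mul trmxK mulmxA.
by rewrite [LHS]mxE.
Qed.

Lemma crC n (P : 'M[R]_n) y v : cr P y v = cr P v y.
Proof. by rewrite /cr addrC. Qed.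

Lemma keyZ q r (N : 'M[R]_(q + r)) : Pi_set N -> forall xi eta, xi != 0 ->
  0 <= qform N (col_mx xi eta) -> exists Z : 'M[R]_(r,q), Zset N Z /\ Z *m xi = eta.
Proof.
case=> sN nD [X [hMP hP]] hK xi eta nx hN.
have hC := derive _ _ _ _ sN hMP hK.
have E := qformE _ _ _ _ sN hC.
set P := ulsubmx N - ursubmx N *m X *m dlsubmx N in hP E.
set D := drsubmx N in nD E hC.
set C := dlsubmx N in E hC.
set z := eta + X *m C *m xi.
rewrite E -/z in hN.
have hd : qform D z <= 0 := nD z.
have ha : 0 <= qform P xi := hP xi.
have [l [hl hv]] : exists l : 'rV[R]_q, (l *m xi = 1) /\
    (forall v, 0 <= qform P v + ((l *m v) 0 0) ^+ 2 * qform D z).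
  case: (eqVneq (qform P xi) 0) => [a0|an0].
    have d0 : qform D z = 0 by lra.
    have [l hl] := exists_l _ _ nx.
    by exists l; split=> // v; rewrite d0 mulr0 addr0; exact: hP.
  have apos : 0 < qform P xi by rewrite lt_neqAle eq_sym an0.
  exists ((2 * qform P xi)^-1 *: (xi^T *m (P + P^T))); split.
    have hcr : cr P xi xi = 2 * qform P xi.
      rewrite /cr [LHS]mxE /qform; lra.
    apply/matrixP=> i j; rewrite !ord1 -scalemxAl [LHS]mxE crE hcr mxE /=.
    by apply: mulVf; rewrite mulf_neq0 // gt_eqF.
  move=> v; rewrite -scalemxAl [Y in Y ^+ 2]mxE crE.
  set b := cr P xi v; set a := qform P xi; set w := (2 * a)^-1 * b.
  have hb : b = 2 * a * w by rewrite /w mulrA mulfV ?mul1r // mulf_neq0 // gt_eqF.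
  have := hP (v + (- w) *: xi); rewrite qform_add crC -/b -/a => h.
  have w2 := sqr_ge0 w.
  have -> : qform P v + w ^+ 2 * qform D z =
    (qform P v + - w * b + (- w) ^+ 2 * a) + w ^+ 2 * (a + qform D z).
    by rewrite hb; ring.
  by apply: addr_ge0 => //; apply: mulr_ge0.
exists (- (X *m C) + z *m l); split.
  move=> v; rewrite qform_tr /IZ mul_col_mx mul1mx E.
  have -> : (- (X *m C) + z *m l) *m v + X *m C *m v = ((l *m v) 0 0) *: z.
    by rewrite mulmxDl mulNmx addrC addNKr -mulmxA mul_c1.
  by rewrite qform_scale; exact: hv.
by rewrite mulmxDl mulNmx -mulmxA hl mulmx1 /z addrC addrK.
Qed.

Lemma qform0 n (A : 'M[R]_n) : qform A 0 = 0.
Proof. by rewrite /qform mulmx0 mxE. Qed.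

Lemma IZmul q r (Z : 'M[R]_(r, q)) (v : 'cV[R]_q) : IZ Z *m v = col_mx v (Z *m v).
Proof. by rewrite /IZ mul_col_mx mul1mx. Qed.

End S.
Arguments cr {R n} M y z.

Theorem mainTheorem7 (R : realType) (q r : nat) (M N : 'M[R]_(q + r)) :
  sym_mx M -> sym_mx N -> Pi_set N ->
  ((exists a : R, 0 < a /\ eigenvalue N a) ->
     ((forall Z : 'M[R]_(r, q), Zset N Z -> Zset M Z) <->
      (forall x : 'cV[R]_(q + r), 0 <= qform N x -> 0 <= qform M x)))
  /\
  (nd (drsubmx N) ->
     ((forall Z : 'M[R]_(r, q), Zset N Z -> Zset_pos M Z) <->
      (forall x : 'cV[R]_(q + r), x != 0 -> 0 <= qform N x -> 0 < qform M x))).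
Proof.
move=> sM sN0 PiN.
have [sN nD [X [hMP hP]] hK] := PiN.
have hC := derive _ _ _ _ _ sN hMP hK.
have E := qformE _ _ _ _ _ sN hC.
have E0 : forall eta, qform N (col_mx 0 eta) = qform (drsubmx N) eta.
  by move=> eta; rewrite E qform0 add0r mulmx0 addr0.
split.
  move=> [a [apos ev]]; split.
    move=> H x; rewrite -(vsubmxK x); move: (usubmx x) (dsubmx x) => xi eta hx.
    case: (eqVneq xi 0) => [xi0|nx]; last first.
      have [Z [hZ hZx]] := keyZ _ _ _ _ PiN _ _ nx hx.
      by have := H Z hZ xi; rewrite qform_tr IZmul hZx.
    rewrite xi0 in hx *; rewrite E0 in hx.
    case: (pickP (fun i : 'I_q => true)) => [i _|hq]; last first.
      case/eigenvalueP: ev => v hv nv.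
      have ny : v^T != 0 by rewrite trmx_eq0.
      have hpos := sq_pos _ _ _ ny.
      have h1 : qform N v^T = a * (v *m v^T) 0 0.
        by rewrite /qform trmxK hv -scalemxAl mxE.
      have h2 : usubmx (v^T) = 0 by apply/matrixP => k; have := hq k.
      have := nD (dsubmx v^T); rewrite -E0 -h2 vsubmxK h1.
      move=> h3; have : 0 < a * (v *m v^T) 0 0 by apply: mulr_gt0 => //; move: hpos; rewrite trmxK.
      by rewrite ltNge h3.
    pose x1 : 'cV[R]_q := delta_mx i 0.
    have nx1 : x1 != 0.
      by apply/negP => /eqP /matrixP /(_ i 0); rewrite !mxE !eqxx /= => /eqP; rewrite oner_eq0.
    pose w := - (X *m dlsubmx N *m x1).
    apply: (@quad_ge0 R _ (cr M (col_mx x1 w) (col_mx 0 eta)) (qform M (col_mx x1 w))) => t.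
    rewrite -qform_add scale_col_mx add_col_mx scaler0 addr0.
    have hN : 0 <= qform N (col_mx x1 (w + t *: eta)).
      rewrite E /w addrAC addNr add0r qform_scale.
      by apply: addr_ge0; [exact: hP | apply: mulr_ge0; [exact: sqr_ge0|]].
    have [Z [hZ hZx]] := keyZ _ _ _ _ PiN _ _ nx1 hN.
    by have := H Z hZ x1; rewrite qform_tr IZmul hZx.
  move=> H Z hZ v; rewrite qform_tr; apply: H; rewrite -qform_tr; exact: hZ.
move=> ndD; split.
  move=> H x nx; rewrite -(vsubmxK x) in nx *; move: (usubmx x) (dsubmx x) nx => xi eta nx hx.
  case: (eqVneq xi 0) => [xi0|nxi]; last first.
    have [Z [hZ hZx]] := keyZ _ _ _ _ PiN _ _ nxi hx.
    by have := H Z hZ xi nxi; rewrite qform_tr IZmul hZx.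
  rewrite xi0 E0 in hx; rewrite xi0 col_mx_eq0 eqxx /= in nx.
  by have := ndD _ nx; rewrite ltNge hx.
move=> H Z hZ v nv; rewrite qform_tr; apply: H.
  by rewrite IZmul col_mx_eq0 negb_and nv.
by rewrite -qform_tr; exact: hZ.
Qed.
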